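(* Let $\mathcal T$ be a theory with signature $\Pi=(\Sigma_0\cup\Sigma,\mathsf{Pred})$, where the symbols of $\Pi_0=(\Sigma_0,\mathsf{Pred})$ are interpreted and those of $\Sigma$ are uninterpreted, and let $C$ be a set of additional constants. Let $\phi$ be a ground $\Pi^C$-formula, let $\Sigma_s\subseteq\Sigma$ be a subset of the uninterpreted function symbols occurring in $\phi$ and $C_s\subseteq C$ a subset of the constants occurring in $\phi$. Let $\Sigma_e$ be the set of function symbols of $\Sigma$ occurring in $\phi$ that are not in $\Sigma_s$, $C_e$ the set of constants of $C$ occurring in $\phi$ that are not in $C_s$, $\Pi_s=(\Sigma_0\cup\Sigma_s,\mathsf{Pred})$, $\Pi_r=(\Sigma_0\cup(\Sigma\setminus\Sigma_e),\mathsf{Pred})$ and $C_r=C\setminus C_e$. Then a ground $\Pi_s^{C_s}$-formula $\psi$ is a $\mathcal T$-general uniform interpolant of $\phi$ with respect to $\Sigma_s\cup C_s$ if and only if: (1) $\mathcal T\models\phi\to\psi$, and (2') for every $\Pi^C$-structure $\mathcal A$ which is a model of $\mathcal T$ with $\mathcal A\models\psi$ there exists a $\Pi^C$-structure $\mathcal B$ which is a model of $\mathcal T$ such that the reduct $\mathcal A_{|\Pi_r^{C_r}}$ embeds into the reduct $\mathcal B_{|\Pi_r^{C_r}}$ and $\mathcal B\models\phi$.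
   Context: For a signature $\Pi$ and a set $C$ of fresh constants, $\Pi^C$ denotes the extension of $\Pi$ by the constants in $C$; $\mathcal A_{|\Pi'}$ denotes the reduct of $\mathcal A$ to a subsignature $\Pi'$. An embedding is an injective homomorphism that also preserves and reflects all predicates. $F\models_{\mathcal T}G$ means every model of $\mathcal T$ that satisfies $F$ satisfies $G$. General uniform interpolant: Let $\mathcal T$ be a theory over $\Pi=(\Sigma_0\cup\Sigma_1,\mathsf{Pred})$ with $\Pi_0=(\Sigma_0,\mathsf{Pred})$ interpreted and $\Sigma_1$ uninterpreted. Let $\phi$ be a quantifier-free $\Pi^C$-formula and $\Sigma_s\subseteq\Sigma_1$, $C_s\subseteq C$ sets of uninterpreted function symbols and constants occurring in $\phi$; let $\Pi_s=(\Sigma_0\cup\Sigma_s,\mathsf{Pred})$. A quantifier-free $\Pi_s^{C_s}$-formula $\psi$ is a $\mathcal T$-general uniform interpolant of $\phi$ w.r.t. $\Sigma_s\cup C_s$ if (1) $\phi\models_{\mathcal T}\psi$, and (2) for every ground formula $\theta$ whose symbols in common with $\phi$ are only interpreted symbols of $\Pi_0$, uninterpreted function symbols in $\Sigma_s$ and constants in $C_s$: if $\phi\models_{\mathcal T}\theta$ then $\psi\models_{\mathcal T}\theta$. *)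

(* Defs.v *)
From mathcomp Require Import ssreflect ssrbool ssrnat fintype.


Record sig := Sig {
  fsym : Type;              (* function symbols (constants = arity 0) *)
  fari : fsym -> nat;
  psym : Type;
  pari : psym -> nat }.

Arguments fari {s}.
Arguments pari {s}.

Inductive term (S : sig) : Type :=
| tvar : nat -> term S
| tapp : forall f : fsym S, ('I_(fari f) -> term S) -> term S.

Inductive form (S : sig) : Type :=
| fFalse : form S
| fTrue : form S
| feq : term S -> term S -> form S
| fpred : forall p : psym S, ('I_(pari p) -> term S) -> form S
| fnot : form S -> form S
| fand : form S -> form S -> form S
| forr : form S -> form S -> form S
| fimp : form S -> form S -> form S
| fall : nat -> form S -> form S
| fex : nat -> form S -> form S.

Arguments tvar {S}.
Arguments tapp {S}.
Arguments fFalse {S}.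
Arguments fTrue {S}.
Arguments feq {S}.
Arguments fpred {S}.
Arguments fnot {S}.
Arguments fand {S}.
Arguments forr {S}.
Arguments fimp {S}.
Arguments fall {S}.
Arguments fex {S}.

Record structure (S : sig) := Structure {
  dom :> Type;
  dom_pt : dom;
  funs : forall f : fsym S, ('I_(fari f) -> dom) -> dom;
  preds : forall p : psym S, ('I_(pari p) -> dom) -> Prop }.

Arguments dom {S}.
Arguments dom_pt {S}.
Arguments funs {S}.
Arguments preds {S}.

Set Implicit Arguments.
Unset Strict Implicit.

Section Semantics.
Variables (S : sig) (A : structure S).

Fixpoint eval (e : nat -> A) (t : term S) : A :=
  match t with
  | tvar x => e x
  | tapp f args => funs A f (fun i => eval e (args i))
  end.

Definition upd (e : nat -> A) (x : nat) (a : A) : nat -> A :=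
  fun y => if Nat.eqb y x then a else e y.

Fixpoint sat (e : nat -> A) (F : form S) : Prop :=
  match F with
  | fFalse => False
  | fTrue => True
  | feq t u => eval e t = eval e u
  | fpred p args => preds A p (fun i => eval e (args i))
  | fnot G => ~ sat e G
  | fand G H => sat e G /\ sat e H
  | forr G H => sat e G \/ sat e H
  | fimp G H => sat e G -> sat e H
  | fall x G => forall a : A, sat (upd e x a) G
  | fex x G => exists a : A, sat (upd e x a) G
  end.

Definition holds (F : form S) : Prop := forall e : nat -> A, sat e F.

End Semantics.

Fixpoint gterm (S : sig) (t : term S) : Prop :=
  match t with
  | tvar _ => False
  | tapp f args => forall i, gterm (args i)
  end.

Fixpoint ground (S : sig) (F : form S) : Prop :=
  match F with
  | fFalse | fTrue => True
  | feq t u => gterm t /\ gterm u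
  | fpred p args => forall i, gterm (args i)
  | fnot G => ground G
  | fand G H | forr G H | fimp G H => ground G /\ ground H
  | fall _ _ | fex _ _ => False
  end.

Fixpoint qfree (S : sig) (F : form S) : Prop :=
  match F with
  | fFalse | fTrue | feq _ _ | fpred _ _ => True
  | fnot G => qfree G
  | fand G H | forr G H | fimp G H => qfree G /\ qfree H
  | fall _ _ | fex _ _ => False
  end.

Fixpoint occ_t (S : sig) (g : fsym S) (t : term S) : Prop :=
  match t with
  | tvar _ => False
  | tapp f args => f = g \/ exists i, occ_t g (args i)
  end.

Fixpoint occ (S : sig) (g : fsym S) (F : form S) : Prop :=
  match F with
  | fFalse | fTrue => False
  | feq t u => occ_t g t \/ occ_t g u
  | fpred p args => exists i, occ_t g (args i)
  | fnot G => occ g G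
  | fand G H | forr G H | fimp G H => occ g G \/ occ g H
  | fall _ G | fex _ G => occ g G
  end.

(* F is a formula over the subsignature whose function symbols satisfy P
   (all predicate symbols are allowed). *)
Definition only_syms (S : sig) (P : fsym S -> Prop) (F : form S) : Prop :=
  forall f, occ f F -> P f.

Definition subsig (S : sig) (P : fsym S -> Prop) : sig :=
  {| fsym := {f : fsym S | P f};
     fari := fun f => fari (proj1_sig f);
     psym := psym S;
     pari := pari |}.

Definition reduct (S : sig) (P : fsym S -> Prop) (A : structure S)
  : structure (subsig P) :=
  @Structure (subsig P) (dom A) (dom_pt A)
    (fun f => funs A (proj1_sig f)) (fun p => preds A p).

Definition embedding (S : sig) (A B : structure S) (h : A -> B) : Prop :=
  (forall x y, h x = h y -> x = y) /\
  (forall f (args : 'I_(fari f) -> A),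
      h (funs A f args) = funs B f (fun i => h (args i))) /\
  (forall p (args : 'I_(pari p) -> A),
      preds A p args <-> preds B p (fun i => h (args i))).

Definition embeds (S : sig) (A B : structure S) : Prop :=
  exists h : A -> B, embedding h.

Definition ext (S : sig) (K : Type) (kar : K -> nat) (Q : Type) (qar : Q -> nat)
  : sig :=
  {| fsym := (fsym S + K)%type;
     fari := fun f => match f with inl g => fari g | inr k => kar k end;
     psym := (psym S + Q)%type;
     pari := fun p => match p with inl g => pari g | inr q => qar q end |}.

Section Ext.
Variables (S : sig) (K : Type) (kar : K -> nat) (Q : Type) (qar : Q -> nat).

Fixpoint lift_t (t : term S) : term (ext S kar qar) :=
  match t with
  | tvar x => tvar x
  | tapp f args => @tapp (ext S kar qar) (inl f) (fun i => lift_t (args i))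
  end.

Fixpoint lift (F : form S) : form (ext S kar qar) :=
  match F with
  | fFalse => fFalse
  | fTrue => fTrue
  | feq t u => feq (lift_t t) (lift_t u)
  | fpred p args => @fpred (ext S kar qar) (inl p) (fun i => lift_t (args i))
  | fnot G => fnot (lift G)
  | fand G H => fand (lift G) (lift H)
  | forr G H => forr (lift G) (lift H)
  | fimp G H => fimp (lift G) (lift H)
  | fall x G => fall x (lift G)
  | fex x G => fex x (lift G)
  end.

Definition restrict (A : structure (ext S kar qar)) : structure S :=
  @Structure S (dom A) (dom_pt A)
    (fun f => funs A (inl f)) (fun p => preds A (inl p)).

End Ext.

(* The setting: Pi^C = (Sigma_0 u Sigma u C, Pred).                    *)

Inductive symkind := KInterp | KUnint | KConst .

Definition models (S : sig) (T : form S -> Prop) (A : structure S) : Prop :=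
  forall sigma, T sigma -> holds A sigma.

Definition entails (S : sig) (T : form S -> Prop) (F G : form S) : Prop :=
  forall A : structure S, models T A -> holds A F -> holds A G.

Definition entailsX (S : sig) (T : form S -> Prop) (K : Type) (kar : K -> nat)
  (Q : Type) (qar : Q -> nat) (F : form S) (theta : form (ext S kar qar)) : Prop :=
  forall A : structure (ext S kar qar),
    models T (restrict A) -> holds A (lift kar qar F) -> holds A theta.

Definition symS (S : sig) (kind : fsym S -> symkind) (Ss Cs : fsym S -> Prop)
  (f : fsym S) : Prop :=
  kind f = KInterp \/ (kind f = KUnint /\ Ss f) \/ (kind f = KConst /\ Cs f).

Definition SigmaE (S : sig) (kind : fsym S -> symkind) (phi : form S)
  (Ss : fsym S -> Prop) (f : fsym S) : Prop :=
  kind f = KUnint /\ occ f phi /\ ~ Ss f.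

Definition ConstE (S : sig) (kind : fsym S -> symkind) (phi : form S)
  (Cs : fsym S -> Prop) (f : fsym S) : Prop :=
  kind f = KConst /\ occ f phi /\ ~ Cs f.

Definition symR (S : sig) (kind : fsym S -> symkind) (phi : form S)
  (Ss Cs : fsym S -> Prop) (f : fsym S) : Prop :=
  kind f = KInterp \/ (kind f = KUnint /\ ~ SigmaE kind phi Ss f)
  \/ (kind f = KConst /\ ~ ConstE kind phi Cs f).

(* The formulas theta range over ground formulas in arbitrary extensions
   of the signature Pi^C (by new function symbols K and predicates Q);
   their symbols in common with phi must be interpreted symbols, or in
   Sigma_s, or in C_s. *)
Definition general_uniform_interpolant (S : sig) (kind : fsym S -> symkind)
  (T : form S -> Prop) (phi : form S) (Ss Cs : fsym S -> Prop) (psi : form S)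
  : Prop :=
  qfree psi /\ only_syms (symS kind Ss Cs) psi /\
  entails T phi psi /\
  (forall (K : Type) (kar : K -> nat) (Q : Type) (qar : Q -> nat)
          (theta : form (ext S kar qar)),
      ground theta ->
      (forall f : fsym S, occ (inl f : fsym (ext S kar qar)) theta -> occ f phi ->
                          symS kind Ss Cs f) ->
      entailsX T phi theta -> entailsX T psi theta).

(* Main.v *)
Require Import Defs.
From mathcomp Require Import ssreflect ssrbool eqtype ssrnat seq fintype.
From Stdlib Require Import Classical ClassicalEpsilon FunctionalExtensionality ProofIrrelevance PropExtensionality List.
From mathcomp Require boolp classical_sets filter.

Set Implicit Arguments.
Unset Strict Implicit.

Record ultra (I : Type) (U : (I -> Prop) -> Prop) : Prop := {
 uT : U (fun _ => True);
 u0 : ~ U (fun _ => False);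
 uI : forall X Y, U X -> U Y -> U (fun i => X i /\ Y i);
 uS : forall X Y : I -> Prop, (forall i, X i -> Y i) -> U X -> U Y;
 uC : forall X, U X \/ U (fun i => ~ X i) }.

Module UF.
Import boolp classical_sets filter.
Lemma ultra_exists (I : Type) (F : (I -> Prop) -> Prop) :
  F (fun _ => True) -> ~ F (fun _ => False) ->
  (forall X Y, F X -> F Y -> F (fun i => X i /\ Y i)) ->
  (forall X Y : I -> Prop, (forall i, X i -> Y i) -> F X -> F Y) ->
  exists U, ultra U /\ forall X, F X -> U X.
Proof.
move=> FT F0 FI FS.
have FF : ProperFilter (F : set_system I).
  by split => //; split.
have [G [GU sFG]] := ultraFilterLemma FF.
exists G; split => //; split.
- exact: filterT.
- exact: (@filter_not_empty _ G).
- by move=> X Y; apply: filterI.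
- by move=> X Y; apply: filterS.
- by move=> X; apply: in_ultra_setVsetC.
Qed.
End UF.

Fixpoint term_ind' (S : sig) (P : term S -> Prop)
  (Hv : forall x, P (tvar x))
  (Ha : forall f args, (forall i, P (args i)) -> P (tapp f args)) (t : term S) : P t :=
  match t with
  | tvar x => Hv x
  | tapp f args => Ha f args (fun i => term_ind' Hv Ha (args i))
  end.

Lemma in_In (T : eqType) (x : T) (s : list T) : x \in s -> List.In x s.
Proof.
elim: s => //= y s IH; rewrite inE => /orP [/eqP ->|/IH]; auto.
Qed.

Section UltraLemmas.
Variables (I : Type) (U : (I -> Prop) -> Prop) (HU : ultra U).

Lemma finU_list (J : Type) (l : list J) (X : J -> I -> Prop) :
  (forall j, U (X j)) -> U (fun i => forall j, List.In j l -> X j i).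
Proof.
move=> HX; elim: l => [|j l IH].
  by apply: (uS HU) (uT HU) => i _ j [].
apply: (uS HU) (uI HU (HX j) IH) => i [H1 H2] k /= [<-|Hk]; auto.
Qed.

Lemma finU (n : nat) (X : 'I_n -> I -> Prop) :
  (forall j, U (X j)) -> U (fun i => forall j, X j i).
Proof.
move=> HX; apply: (uS HU) (finU_list (ord_enum n) HX) => i H j.
apply: H; apply: in_In; exact: mem_ord_enum.
Qed.

Lemma notU X : ~ U X <-> U (fun i => ~ X i).
Proof.
split.
  by move=> nX; case: (uC HU X) => [/nX []|].
move=> HnX HX; apply: (u0 HU); apply: (uS HU) (uI HU HX HnX) => i [H1 H2]; exact: H2 H1.
Qed.

Lemma U_and X Y : U (fun i => X i /\ Y i) <-> U X /\ U Y.
Proof.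
split.
  by move=> H; split; apply: (uS HU) H => i [].
by case; apply: uI.
Qed.

Lemma U_or X Y : U (fun i => X i \/ Y i) <-> U X \/ U Y.
Proof.
split.
  move=> H; case: (classic (U X)) => HX; first by left.
  right; move/notU: HX => HX.
  by apply: (uS HU) (uI HU H HX) => i [[H1|H1] H2]; [case: (H2 H1)|exact: H1].
by case=> [H|H]; apply: (uS HU) H => i; auto.
Qed.

Lemma U_imp X Y : U (fun i => X i -> Y i) <-> (U X -> U Y).
Proof.
split.
  by move=> H HX; apply: (uS HU) (uI HU H HX) => i [H1 H2]; auto.
move=> H; case: (classic (U X)) => HX.
  by apply: (uS HU) (H HX) => i; auto.
move/notU: HX => HX; apply: (uS HU) HX => i H1 H2; contradiction.
Qed.

End UltraLemmas.

Section Ultraproduct.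
Variables (S : sig) (I : Type) (U : (I -> Prop) -> Prop) (HU : ultra U)
  (B : I -> structure S).

Definition P := forall i, dom (B i).
Definition eqv (x y : P) := U (fun i => x i = y i).
Definition cls (x : P) : P -> Prop := fun y => eqv x y.
Definition Qt := {X : P -> Prop | exists x, X = cls x}.
Definition qc (x : P) : Qt := exist _ (cls x) (ex_intro (fun y => cls x = cls y) x (Logic.eq_refl _)).
Definition rep (q : Qt) : P :=
  proj1_sig (constructive_indefinite_description _ (proj2_sig q)).

Arguments qc : simpl never.
Arguments rep : simpl never.

Lemma Qt_eq (a b : Qt) : proj1_sig a = proj1_sig b -> a = b.
Proof.
case: a b => [a Ha] [b Hb] /= E; subst b; f_equal; apply: proof_irrelevance.
Qed.

Lemma qc_rep q : qc (rep q) = q.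
Proof.
apply: Qt_eq => /=; rewrite /rep.
case: (constructive_indefinite_description _ _) => x /= ->; done.
Qed.

Lemma eqv_refl x : eqv x x.
Proof. by apply: (uS HU) (uT HU). Qed.
Lemma eqv_sym x y : eqv x y -> eqv y x.
Proof. by apply: (uS HU). Qed.
Lemma eqv_trans x y z : eqv x y -> eqv y z -> eqv x z.
Proof. by move=> H1 H2; apply: (uS HU) (uI HU H1 H2) => i [-> ->]. Qed.

Lemma qc_eq x y : qc x = qc y <-> eqv x y.
Proof.
split.
  move=> E; have : cls x y by rewrite -[cls x]/(proj1_sig (qc x)) E; exact: eqv_refl.
  done.
move=> H; apply: Qt_eq => /=; apply: functional_extensionality => z.
apply: propositional_extensionality; rewrite /cls; split => H'.
  exact: eqv_trans (eqv_sym H) H'.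
exact: eqv_trans H H'.
Qed.

Lemma rep_qc x : eqv (rep (qc x)) x.
Proof. by apply/qc_eq; rewrite qc_rep. Qed.

Definition UP : structure S :=
  @Structure S Qt (qc (fun i => dom_pt (B i)))
    (fun f args => qc (fun i => funs (B i) f (fun j => rep (args j) i)))
    (fun p args => U (fun i => preds (B i) p (fun j => rep (args j) i))).

Lemma funs_UP f (v : 'I_(fari f) -> P) :
  funs UP f (fun j => qc (v j)) = qc (fun i => funs (B i) f (fun j => v j i)).
Proof.
apply/qc_eq; apply: (uS HU) (finU HU (fun j => rep_qc (v j))) => i H /=.
by f_equal; apply: functional_extensionality => j; rewrite H.
Qed.

Lemma preds_UP p (v : 'I_(pari p) -> P) :
  preds UP p (fun j => qc (v j)) <-> U (fun i => preds (B i) p (fun j => v j i)).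
Proof.
have E := finU HU (fun j => rep_qc (v j)).
have Hf : forall i, (forall j, rep (qc (v j)) i = v j i) ->
   (fun j => rep (qc (v j)) i) = (fun j => v j i).
  by move=> i H; apply: functional_extensionality.
split => /= H.
  by apply: (uS HU) (uI HU H E) => i [H1 /Hf <-].
by apply: (uS HU) (uI HU H E) => i [H1 /Hf ->].
Qed.

Lemma eval_UP (ee : nat -> P) t :
  eval (A:=UP) (fun k => qc (ee k)) t = qc (fun i => eval (A:=B i) (fun k => ee k i) t).
Proof.
elim/term_ind': t => [x|f args IH] //.
change (funs UP f (fun i => eval (A:=UP) (fun k => qc (ee k)) (args i)) =
  qc (fun i => funs (B i) f (fun j => eval (A:=B i) (fun k => ee k i) (args j)))).
have -> : (fun i => eval (A:=UP) (fun k => qc (ee k)) (args i)) =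
          (fun i => qc (fun i0 => eval (A:=B i0) (fun k => ee k i0) (args i))).
  by apply: functional_extensionality.
exact: funs_UP.
Qed.

Definition updP (ee : nat -> P) x (y : P) : nat -> P :=
  fun k => if Nat.eqb k x then y else ee k.

Lemma upd_qc (ee : nat -> P) (x : nat) (y : P) :
  upd (A:=UP) (fun k => qc (ee k)) x (qc y) = (fun k => qc (updP ee x y k)).
Proof.
by apply: functional_extensionality => k; rewrite /upd /updP; case: (Nat.eqb k x).
Qed.

Lemma upd_comp (ee : nat -> P) (x : nat) (y : P) i :
  (fun k => updP ee x y k i) = upd (A:=B i) (fun k => ee k i) x (y i).
Proof.
by apply: functional_extensionality => k; rewrite /upd /updP; case: (Nat.eqb k x).
Qed.

Lemma los (F : form S) : forall ee : nat -> P,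
  sat (A:=UP) (fun k => qc (ee k)) F <-> U (fun i => sat (A:=B i) (fun k => ee k i) F).
Proof.
elim: F => [| |t u|p args|G IH|G IHG H IHH|G IHG H IHH|G IHG H IHH|x G IH|x G IH] ee; cbn [sat].
- split => // ; exact: (u0 HU).
- by split => // _; exact: (uT HU).
- by rewrite !eval_UP qc_eq.
- have -> : (fun i => eval (A:=UP) (fun k => qc (ee k)) (args i)) =
            (fun i => qc (fun i0 => eval (A:=B i0) (fun k => ee k i0) (args i))).
    by apply: functional_extensionality => j; rewrite eval_UP.
  exact: preds_UP.
- by rewrite IH notU.
- by rewrite IHG IHH U_and.
- by rewrite IHG IHH U_or.
- by rewrite IHG IHH U_imp.
- split.
  + move=> H; apply: NNPP => /(notU HU) H2.
    pose y : P := fun i => epsilon (inhabits (dom_pt (B i)))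
                  (fun a => ~ sat (A:=B i) (upd (A:=B i) (fun k => ee k i) x a) G).
    have H3 : U (fun i => ~ sat (A:=B i) (fun k => updP ee x y k i) G).
      apply: (uS HU) H2 => i Hi; rewrite upd_comp.
      apply: (epsilon_spec (inhabits (dom_pt (B i)))
                (fun a => ~ sat (A:=B i) (upd (A:=B i) (fun k => ee k i) x a) G)).
      by apply: not_all_ex_not.
    have := H (qc y); rewrite upd_qc IH => H4.
    by apply: (u0 HU); apply: (uS HU) (uI HU H4 H3) => i [H5 H6]; exact: H6 H5.
  + move=> H a; rewrite -(qc_rep a) upd_qc IH.
    by apply: (uS HU) H => i Hi; rewrite upd_comp.
- split.
  + case=> a; rewrite -(qc_rep a) upd_qc IH => H.
    by apply: (uS HU) H => i Hi; exists (rep a i); rewrite -upd_comp.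
  + move=> H.
    pose y : P := fun i => epsilon (inhabits (dom_pt (B i)))
                  (fun a => sat (A:=B i) (upd (A:=B i) (fun k => ee k i) x a) G).
    exists (qc y); rewrite upd_qc IH.
    apply: (uS HU) H => i Hi; rewrite upd_comp.
    exact: (epsilon_spec (inhabits (dom_pt (B i)))
                (fun a => sat (A:=B i) (upd (A:=B i) (fun k => ee k i) x a) G)).
Qed.

Lemma los_holds F : (forall i, holds (B i) F) -> holds UP F.
Proof.
move=> H e.
have -> : e = (fun k => qc (rep (e k))).
  by apply: functional_extensionality => k; rewrite qc_rep.
by apply/los; apply: (uS HU) (uT HU) => i _; apply: H.
Qed.

End Ultraproduct.

Section Lift.
Variables (S : sig) (K : Type) (kar : K -> nat) (Q : Type) (qar : Q -> nat)
  (A : structure (ext S kar qar)).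

Lemma eval_lift (e : nat -> dom A) t :
  eval (A:=restrict A) e t = eval (A:=A) e (lift_t kar qar t).
Proof.
elim/term_ind': t => [x|f args IH] //=.
by f_equal; apply: functional_extensionality => i; rewrite IH.
Qed.

Lemma sat_lift F : forall e : nat -> dom A,
  sat (A:=restrict A) e F <-> sat (A:=A) e (Defs.lift kar qar F).
Proof.
elim: F => [| |t u|p args|G IH|G IHG H IHH|G IHG H IHH|G IHG H IHH|x G IH|x G IH] e /=.
- done.
- done.
- by rewrite !eval_lift.
- have -> : (fun i => eval (A:=restrict A) e (args i)) =
            (fun i => eval (A:=A) e (lift_t kar qar (args i))).
    by apply: functional_extensionality => i; rewrite eval_lift.
  done.
- by rewrite IH.
- by rewrite IHG IHH.
- by rewrite IHG IHH.
- by rewrite IHG IHH.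
- by split => H a; apply/IH; apply: H.
- by split => [[a H]|[a H]]; exists a; apply/IH.
Qed.

Lemma holds_lift F : holds (restrict A) F <-> holds A (Defs.lift kar qar F).
Proof. by split => H e; apply/sat_lift. Qed.

End Lift.

Lemma ground_qfree (S : sig) (F : form S) : ground F -> qfree F.
Proof. elim: F => //=; intros; tauto. Qed.

Section Syms.
Variables (S : sig) (kind : fsym S -> symkind) (phi : form S) (Ss Cs : fsym S -> Prop).

Lemma symR_of f : (occ f phi -> symS kind Ss Cs f) -> symR kind phi Ss Cs f.
Proof.
rewrite /symR /symS /SigmaE /ConstE => H.
case: (classic (occ f phi)) => Ho.
  case: (H Ho) => [->|[[Hk HS]|[Hk HC]]]; first by left.
  - by right; left; split => // [[_ [_ nS]]].
  - by right; right; split => // [[_ [_ nC]]].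
case: (kind f); [by left|right; left|right; right]; split => //; by case=> _ [].
Qed.

Lemma symS_of f : symR kind phi Ss Cs f -> occ f phi -> symS kind Ss Cs f.
Proof.
rewrite /symR /symS /SigmaE /ConstE => [[H|[[Hk HS]|[Hk HC]]]] Ho; first by left.
- case: (classic (Ss f)) => H; first by right; left.
  by case: HS.
- case: (classic (Cs f)) => H; first by right; right.
  by case: HC.
Qed.
End Syms.

Section Back.
Variables (S : sig) (kind : fsym S -> symkind) (T : form S -> Prop)
  (phi : form S) (Ss Cs : fsym S -> Prop) (psi : form S).
Hypothesis H2 : forall A : structure S, models T A -> holds A psi ->
     exists B : structure S, models T B /\
       embeds (reduct (symR kind phi Ss Cs) A) (reduct (symR kind phi Ss Cs) B) /\
       holds B phi.

Lemma back K (kar : K -> nat) Q (qar : Q -> nat) (theta : form (ext S kar qar)) :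
  ground theta ->
  (forall f : fsym S, occ (inl f : fsym (ext S kar qar)) theta -> occ f phi ->
                          symS kind Ss Cs f) ->
  entailsX T phi theta -> entailsX T psi theta.
Proof.
move=> Hg Hsym Hent A' HT Hpsi.
set R := symR kind phi Ss Cs.
have HRth : forall f, occ (inl f : fsym (ext S kar qar)) theta -> R f.
  by move=> f Ho; apply: symR_of; apply: Hsym.
have Hpsi' : holds (restrict A') psi by apply/holds_lift.
have [B [HTB [[h [hinj [hfun hpred]]] HBphi]]] := H2 HT Hpsi'.
move: h hinj hfun hpred HTB HBphi.
case: B => dB ptB fB pB h hinj hfun hpred HTB HBphi.
pose B' := @Structure (ext S kar qar) dB ptB
 (fun f => match f as f0 return ('I_(@fari (ext S kar qar) f0) -> dB) -> dB with
   | inl g => fB g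
   | inr k => fun args => h (funs A' (inr k)
        (epsilon (inhabits (fun _ : 'I_(kar k) => dom_pt A'))
           (fun a : 'I_(kar k) -> dom A' => forall i, args i = h (a i))))
   end)
 (fun p => match p as p0 return ('I_(@pari (ext S kar qar) p0) -> dB) -> Prop with
   | inl g => pB g
   | inr q => fun args => exists a : 'I_(qar q) -> dom A',
                (forall i, args i = h (a i)) /\ preds A' (inr q) a
   end).
have HTB' : models T (restrict B') by exact: HTB.
have HBphi' : holds B' (Defs.lift kar qar phi).
  by apply/holds_lift; exact: HBphi.
have Hth := Hent B' HTB' HBphi'.
have Hterm : forall t, gterm t ->
    (forall f, occ_t (inl f : fsym (ext S kar qar)) t -> R f) ->
    forall (e : nat -> dB) (e' : nat -> dom A'),
    eval (A:=B') e t = h (eval (A:=A') e' t).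
  elim/term_ind' => [x|f args IH] //= Hgt Hs e e'.
  have IH' : forall i, eval (A:=B') e (args i) = h (eval (A:=A') e' (args i)).
    by move=> i; apply: IH => // g Hgi; apply: Hs; right; exists i.
  case: f args IH Hgt Hs IH' => [g|k] args IH Hgt Hs IH'.
  - have Hg' : R g by apply: Hs; left.
    have := hfun (exist _ g Hg') (fun i => eval (A:=A') e' (args i)).
    rewrite /= => ->.
    by f_equal; apply: functional_extensionality => i; apply: IH'.
  - f_equal; f_equal.
    set P := fun a : 'I_(kar k) -> dom A' => forall i, eval (A:=B') e (args i) = h (a i).
    have Hex : exists a, P a.
      by exists (fun i => eval (A:=A') e' (args i)); move=> i; apply: IH'.
    have Hsp := epsilon_spec (inhabits (fun _ : 'I_(kar k) => dom_pt A')) P Hex.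
    apply: functional_extensionality => i; apply: hinj.
    by rewrite -Hsp IH'.
have Hform : forall F, ground F ->
    (forall f, occ (inl f : fsym (ext S kar qar)) F -> R f) ->
    forall (e : nat -> dB) (e' : nat -> dom A'),
    sat (A:=B') e F <-> sat (A:=A') e' F.
  elim => [| |t u|p args|G IH|G IHG H IHH|G IHG H IHH|G IHG H IHH|x G IH|x G IH]
     //= Hgr Hs e e'.
  - case: Hgr => Ht Hu.
    rewrite (Hterm t Ht _ e e'); last by move=> f Hf; apply: Hs; left.
    rewrite (Hterm u Hu _ e e'); last by move=> f Hf; apply: Hs; right.
    by split => [/hinj|->].
  - have IH' : forall i, eval (A:=B') e (args i) = h (eval (A:=A') e' (args i)).
      move=> i; apply: Hterm; [exact: Hgr | by move=> f Hf; apply: Hs; exists i].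
    have E : (fun i => eval (A:=B') e (args i)) = (fun i => h (eval (A:=A') e' (args i))).
      by apply: functional_extensionality.
    case: p args Hgr Hs IH' E => [g|q] args Hgr Hs IH' E.
    + rewrite E.
      have := hpred g (fun i => eval (A:=A') e' (args i)).
      by rewrite /= => ->.
    + split.
      * case=> a [Ha Hp].
        have -> : (fun i => eval (A:=A') e' (args i)) = a; last done.
        by apply: functional_extensionality => i; apply: hinj; rewrite -IH' Ha.
      * by move=> Hp; exists (fun i => eval (A:=A') e' (args i)); split => // i; apply: IH'.
  - by rewrite (IH Hgr Hs e e').
  - case: Hgr => H1 H2'.
    rewrite (IHG H1 _ e e'); last by move=> f Hf; apply: Hs; left.
    by rewrite (IHH H2' _ e e'); last by move=> f Hf; apply: Hs; right.
  - case: Hgr => H1 H2'.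
    rewrite (IHG H1 _ e e'); last by move=> f Hf; apply: Hs; left.
    by rewrite (IHH H2' _ e e'); last by move=> f Hf; apply: Hs; right.
  - case: Hgr => H1 H2'.
    rewrite (IHG H1 _ e e'); last by move=> f Hf; apply: Hs; left.
    by rewrite (IHH H2' _ e e'); last by move=> f Hf; apply: Hs; right.
move=> e'; apply/(Hform theta Hg HRth (fun _ => ptB) e'); exact: Hth.
Qed.
End Back.

Lemma etaS (S : sig) (A : structure S) :
  @Structure S (dom A) (dom_pt A) (fun f => funs A f) (fun p => preds A p) = A.
Proof. by case: A. Qed.

Section Forth.
Variables (S : sig) (kind : fsym S -> symkind) (T : form S -> Prop)
  (phi : form S) (Ss Cs : fsym S -> Prop) (psi : form S).
Variable A0 : structure S.

Inductive fact : Type :=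
| FFun (f : fsym S) (Hf : symR kind phi Ss Cs f) (args : 'I_(fari f) -> dom A0)
| FDiff (a b : dom A0)
| FPred (p : psym S) (args : 'I_(pari p) -> dom A0)
| FNPred (p : psym S) (args : 'I_(pari p) -> dom A0).

Definition trueA (x : fact) : Prop :=
  match x with
  | FFun _ _ _ => True
  | FDiff a b => a <> b
  | FPred p args => preds A0 p args
  | FNPred p args => ~ preds A0 p args
  end.

Definition TF := {x : fact | trueA x}.

Definition qarE (q : Empty_set) : nat := match q with end.
Definition E := ext S (fun _ : dom A0 => 0) qarE.

Definition cst (a : dom A0) : term E := @tapp E (inr a) (fun _ => tvar 0).

Arguments cst : simpl never.

Definition fml (x : fact) : form E :=
  match x with
  | FFun f _ args => feq (@tapp E (inl f) (fun j => cst (args j))) (cst (funs A0 f args))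
  | FDiff a b => fnot (feq (cst a) (cst b))
  | FPred p args => @fpred E (inl p) (fun j => cst (args j))
  | FNPred p args => fnot (@fpred E (inl p) (fun j => cst (args j)))
  end.

Definition bigand (L : list TF) : form E :=
  fold_right (fun x acc => fand (fml (proj1_sig x)) acc) fTrue L.

Definition theta (L : list TF) : form E := fnot (bigand L).

Lemma gterm_cst a : gterm (cst a).
Proof. by rewrite /cst; case. Qed.

Lemma ground_theta L : ground (theta L).
Proof.
rewrite /theta /=; elim: L => [|[x Hx] L IH] //=; split => //.
case: x Hx => [f Hf args|a b|p args|p args] _ /=;
  repeat split; intros; match goal with i : 'I_0 |- _ => by case: i end.
Qed.

Lemma occ_cst f a : ~ occ_t (inl f : fsym E) (cst a).
Proof. by rewrite /cst /=; case => [//|[i]]; case: i. Qed.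

Lemma occ_theta L f : occ (inl f : fsym E) (theta L) -> symR kind phi Ss Cs f.
Proof.
rewrite /theta /=; elim: L => [|[x Hx] L IH] //= [H|H]; last exact: IH.
case: x Hx H => [g Hg args|a b|p args|p args] _ /=.
- case=> [[[<-]//|[j /occ_cst []]]|/occ_cst []].
- by case=> /occ_cst [].
- by case=> j /occ_cst [].
- by case=> j /occ_cst [].
Qed.


Definition Aexp : structure E :=
  @Structure E (dom A0) (dom_pt A0)
   (fun f => match f as f0 return ('I_(@fari E f0) -> dom A0) -> dom A0 with
      | inl g => funs A0 g
      | inr a => fun _ => a end)
   (fun p => match p as p0 return ('I_(@pari E p0) -> dom A0) -> Prop with
      | inl g => preds A0 g
      | inr q => match q with end end).

Lemma Aexp_bigand L e : sat (A:=Aexp) e (bigand L).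
Proof.
elim: L => [|[x Hx] L IH] //=; split => //.
by case: x Hx => [f Hf args|a b|p args|p args] Hx /=.
Qed.

Lemma bigand_in (B' : structure E) (e : nat -> dom B') L x :
  In x L -> sat (A:=B') e (bigand L) -> sat (A:=B') e (fml (proj1_sig x)).
Proof.
elim: L => [|y L IH] //= [<-|Hx] [H1 H2] //.
exact: IH.
Qed.

Lemma forth
 (HI : forall K (kar : K -> nat) Q (qar : Q -> nat) (th : form (ext S kar qar)),
    ground th ->
    (forall f, occ (inl f : fsym (ext S kar qar)) th -> occ f phi -> symS kind Ss Cs f) ->
    entailsX T phi th -> entailsX T psi th)
 (HTA : models T A0) (HpsiA : holds A0 psi) :
 exists B : structure S, models T B /\
   embeds (reduct (symR kind phi Ss Cs) A0) (reduct (symR kind phi Ss Cs) B) /\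
   holds B phi.
Proof.
set R := symR kind phi Ss Cs.
have HB : forall L, exists B' : structure E, models T (restrict B') /\ holds B' (Defs.lift (fun _ : dom A0 => 0) qarE phi) /\ ~ holds B' (theta L).
  move=> L; apply: NNPP => Hn.
  have Hent : entailsX T phi (theta L).
    move=> B' HT Hphi; apply: NNPP => Hnh; apply: Hn; exists B'; split => //.
  have Hsym : forall f, occ (inl f : fsym E) (theta L) -> occ f phi -> symS kind Ss Cs f.
    by move=> f Ho; apply: symS_of; apply: occ_theta Ho.
  have Hps := HI _ _ _ _ _ (ground_theta L) Hsym Hent.
  have E1 : restrict Aexp = A0 := etaS A0.
  have HT' : models T (restrict Aexp) by rewrite E1.
  have Hpsi' : holds Aexp (Defs.lift (fun _ : dom A0 => 0) qarE psi).
    by apply/holds_lift; rewrite E1.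
  have := Hps Aexp HT' Hpsi' (fun _ => dom_pt A0); apply.
  exact: Aexp_bigand.
pose Bf := fun L => proj1_sig (constructive_indefinite_description _ (HB L)).
have HBf : forall L, models T (restrict (Bf L)) /\ holds (Bf L) (Defs.lift (fun _ : dom A0 => 0) qarE phi) /\ ~ holds (Bf L) (theta L).
  by move=> L; rewrite /Bf; case: (constructive_indefinite_description _ _).
pose cval := fun L (a : dom A0) => funs (Bf L) (inr a) (fun _ => dom_pt (Bf L)).
pose factB := fun L (x : fact) => match x with
  | FFun f _ args => funs (Bf L) (inl f) (fun j => cval L (args j)) = cval L (funs A0 f args)
  | FDiff a b => cval L a <> cval L b
  | FPred p args => preds (Bf L) (inl p) (fun j => cval L (args j))
  | FNPred p args => ~ preds (Bf L) (inl p) (fun j => cval L (args j))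
  end.
have factB_in : forall L (x : TF), In x L -> factB L (proj1_sig x).
  move=> L x Hx.
  have [e He] : exists e, sat (A:=Bf L) e (bigand L).
    case: (HBf L) => _ [_ Hn]; apply: NNPP => Hn2; apply: Hn => e He; apply: Hn2.
    by exists e; apply: NNPP.
  have Hc : forall a, eval (A:=Bf L) e (cst a) = cval L a.
    move=> a; rewrite /cst /= /cval; f_equal.
    by apply: functional_extensionality; case.
  have : sat (A:=Bf L) e (fml (proj1_sig x)).
    exact: bigand_in Hx He.
  have Hc' : forall a, funs (Bf L) (inr a) (fun _ : 'I_0 => e 0) = cval L a.
    move=> a; rewrite /cval; f_equal.
    by apply: functional_extensionality; case.
  have Hcf : forall n (g : 'I_n -> dom A0),
      (fun i => funs (Bf L) (inr (g i)) (fun _ : 'I_0 => e 0)) = (fun i => cval L (g i)).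
    by move=> n g; apply: functional_extensionality => i; apply: Hc'.
  case: x {Hx} => [[f Hf args|a b|p args|p args] Hx] /=.
  - by rewrite (Hcf _ args) Hc'.
  - by rewrite !Hc'.
  - by rewrite (Hcf _ args).
  - by rewrite (Hcf _ args).
pose F := fun X : list TF -> Prop =>
  exists L0, forall L, (forall x, In x L0 -> In x L) -> X L.
have [U [HU HFU]] : exists U, ultra U /\ forall X, F X -> U X.
  apply: UF.ultra_exists.
  - by exists nil.
  - by case=> L0 H; apply: (H L0).
  - move=> X Y [L0 H0] [L1 H1]; exists (L0 ++ L1) => L HL; split.
    + by apply: H0 => x Hx; apply: HL; apply: in_or_app; left.
    + by apply: H1 => x Hx; apply: HL; apply: in_or_app; right.
  - by move=> X Y HXY [L0 H0]; exists L0 => L HL; apply: HXY; apply: H0.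
have HF : forall x : TF, U (fun L => factB L (proj1_sig x)).
  move=> x; apply: (uS HU) (fun L H => factB_in L x H) _.
  by apply: HFU; exists (x :: nil) => L HL; apply: HL; left.
pose Bs := fun L => restrict (Bf L).
pose h := fun a : dom A0 => @qc S (list TF) U Bs (fun L => cval L a).
have Hrep : forall n (g : 'I_n -> dom A0),
    U (fun L => (fun j => rep (h (g j)) L) = (fun j => cval L (g j))).
  move=> n g; apply: (uS HU) (finU HU (fun j => rep_qc HU (fun L => cval L (g j)))).
  by move=> L H; apply: functional_extensionality.
exists (UP U Bs); split; [|split].
- move=> sigma Hs; apply: (los_holds HU) => L.
  by case: (HBf L) => HT _; apply: HT.
- exists h; split; [|split].
  + move=> a b /(qc_eq HU) Hab; apply: NNPP => Hne.
    have := HF (exist _ (FDiff a b) Hne) => /= Hd.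
    apply: (u0 HU); apply: (uS HU) (uI HU Hab Hd) => L [H1 H2]; exact: H2 H1.
  + case=> f Hf args /=.
    rewrite {1}/h; apply/(qc_eq HU).
    apply: (uS HU) (uI HU (HF (exist _ (FFun Hf args) I)) (Hrep _ args)) => L /= [H1 H2].
    by rewrite -H1 H2.
  + move=> p args /=.
    split => Hp.
    * have K1 := HF (exist _ (FPred args) Hp).
      have K2 := Hrep _ args.
      have K3 := uI HU K1 K2.
      apply: (uS HU) K3 => L /= [H1 H2].
      by rewrite H2.
    * apply: NNPP => Hn.
      have := HF (exist _ (FNPred args) Hn) => /= Hd.
      apply: (u0 HU); apply: (uS HU) (uI HU (uI HU Hp Hd) (Hrep _ args)) => L [[H1 H3] H2].
      by rewrite H2 in H1; exact: H3 H1.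
- apply: (los_holds HU) => L.
  by case: (HBf L) => _ [Hp _]; apply/holds_lift.
Qed.


End Forth.

Theorem mainTheorem1 (S : sig) (kind : fsym S -> symkind)
  (kind_const : forall f, kind f = KConst -> fari f = 0)
  (T : form S -> Prop)
  (T_over_Pi : forall sigma, T sigma -> forall f, occ f sigma -> kind f <> KConst)
  (phi : form S) (phi_ground : ground phi)
  (Ss Cs : fsym S -> Prop)
  (Ss_sub : forall f, Ss f -> kind f = KUnint /\ occ f phi)
  (Cs_sub : forall f, Cs f -> kind f = KConst /\ occ f phi)
  (psi : form S) (psi_ground : ground psi)
  (psi_sig : only_syms (symS kind Ss Cs) psi) :
  general_uniform_interpolant kind T phi Ss Cs psi <->
  (entails T phi psi /\
   forall A : structure S, models T A -> holds A psi ->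
     exists B : structure S, models T B /\
       embeds (reduct (symR kind phi Ss Cs) A) (reduct (symR kind phi Ss Cs) B) /\
       holds B phi).
Proof.
split.
- case=> _ [_ [Hent HI]]; split => // A HTA HpsiA.
  exact: (forth HI HTA HpsiA).
- case=> Hent H2; split; first exact: ground_qfree.
  split => //; split => // K kar Q qar theta Hg Hs.
  exact: (back H2 Hg Hs).
Qed.
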